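(* Let $(R,\mathfrak{m})$ be an Artinian local ring with $|R/\mathfrak{m}|=q<\infty$ such that $R$ has only finitely many ideals. Then $|\mathfrak{m}^i|\le q^{|\mathbb{I}(\mathfrak{m}^i)|}$ for every $i\ge 1$, and $|R|\le q^{|\mathbb{I}(R)|}$.
   Context: All rings are commutative with $1\neq 0$. For an ideal $J$ of $R$, $\mathbb{I}(J)$ denotes the set of all ideals $I$ of $R$ with $I\subseteq J$. *)

(* Defs.v *)
From HB Require Import structures.
From mathcomp Require Import all_boot all_order all_algebra.
Set Implicit Arguments. Unset Strict Implicit. Unset Printing Implicit Defensive.
Import GRing.Theory.
Local Open Scope ring_scope.

Section IdealDefs.
Variable R : comNzRingType.

Definition is_ideal (I : R -> Prop) : Prop :=
  [/\ I 0, (forall x y, I x -> I y -> I (x + y)) & (forall a x, I x -> I (a * x))].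

Definition subideal (I J : R -> Prop) : Prop := forall x, I x -> J x.
Definition same_ideal (I J : R -> Prop) : Prop := forall x, I x <-> J x.

Definition ideal_gen (S : R -> Prop) : R -> Prop :=
  fun x => forall I, is_ideal I -> subideal S I -> I x.

Definition ideal_mul (I J : R -> Prop) : R -> Prop :=
  ideal_gen (fun x => exists a b, [/\ I a, J b & x = a * b]).

Fixpoint ideal_pow (I : R -> Prop) (n : nat) : R -> Prop :=
  match n with
  | 0%N => fun _ => True
  | n'.+1 => ideal_mul (ideal_pow I n') I
  end.

Definition is_maximal (M : R -> Prop) : Prop :=
  [/\ is_ideal M, ~ M 1 &
      forall I, is_ideal I -> subideal M I -> ~ I 1 -> subideal I M].

Definition is_local_with (m : R -> Prop) : Prop :=
  is_maximal m /\ forall M, is_maximal M -> same_ideal M m.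

Definition artinian : Prop :=
  forall I : nat -> R -> Prop, (forall n, is_ideal (I n)) ->
    (forall n, subideal (I n.+1) (I n)) ->
    exists N, forall n, (N <= n)%N -> same_ideal (I n) (I N).

Definition finitely_many_ideals : Prop :=
  exists L : seq (R -> Prop), forall I, is_ideal I ->
    exists2 i, (i < size L)%N & same_ideal I (nth (fun _ => False) L i).

(* |R / m| = q : there are exactly q cosets of m. *)
Definition quot_card (m : R -> Prop) (q : nat) : Prop :=
  exists r : seq R, [/\ size r = q,
    (forall i j, (i < size r)%N -> (j < size r)%N -> i <> j -> ~ m (nth 0 r i - nth 0 r j)) &
    (forall x, exists2 i, (i < size r)%N & m (x - nth 0 r i))].

(* |I(J)| = n : exactly n ideals I of R with I contained in J (up to equality of sets). *)
Definition num_ideals_in (J : R -> Prop) (n : nat) : Prop :=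
  exists L : seq (R -> Prop), [/\ size L = n,
    (forall i, (i < size L)%N -> is_ideal (nth (fun _ => False) L i) /\
                                 subideal (nth (fun _ => False) L i) J),
    (forall i j, (i < size L)%N -> (j < size L)%N -> i <> j ->
        ~ same_ideal (nth (fun _ => False) L i) (nth (fun _ => False) L j)) &
    (forall I, is_ideal I -> subideal I J ->
        exists2 i, (i < size L)%N & same_ideal I (nth (fun _ => False) L i))].

(* |S| <= N : every duplicate-free list of elements of S has length <= N. *)
Definition card_le (S : R -> Prop) (N : nat) : Prop :=
  forall s : seq R, uniq s -> (forall x, x \in s -> S x) -> (size s <= N)%N.

End IdealDefs.

(* Main.v *)
Require Import Defs.
From mathcomp Require Import all_boot all_order all_algebra.
From Stdlib Require Import Classical ClassicalEpsilon.
Set Implicit Arguments. Unset Strict Implicit. Unset Printing Implicit Defensive.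
Import GRing.Theory.

Definition pb (P : Prop) : bool := if excluded_middle_informative P then true else false.
Lemma pbP (P : Prop) : reflect P (pb P).
Proof. rewrite /pb; case: excluded_middle_informative => H; [exact: ReflectT | exact: ReflectF]. Qed.

Lemma count_le (T : Type) (a b : pred T) (s : seq T) :
  (forall x, List.In x s -> a x -> b x) -> (count a s <= count b s)%N.
Proof.
elim: s => //= y s IH H.
apply: leq_add; last by apply: IH => x Hx; apply: H; right.
case Ha: (a y) => //; by rewrite (H y (or_introl erefl) Ha).
Qed.

Lemma count_lt (T : Type) (a b : pred T) (s : seq T) :
  (forall x, List.In x s -> a x -> b x) -> (exists x, List.In x s /\ b x /\ ~~ a x) ->
  (count a s < count b s)%N.
Proof.
elim: s => [|y s IH] H [x [Hx [bx ax]]] //=.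
case: Hx => [->|Hx].
  by rewrite (negbTE ax) bx add0n add1n ltnS; apply: count_le => z Hz; apply: (H); right.
have H1 : (a y <= b y)%N.
  case Ha: (a y) => //; by rewrite (H y (or_introl erefl) Ha).
have H2 : (count a s < count b s)%N.
  apply: IH; first by move=> z Hz; apply: (H); right.
  by exists x.
by apply: leq_trans (leq_add H1 H2); rewrite addnS.
Qed.

Lemma nth_In (T : Type) (d : T) (L : seq T) i : (i < size L)%N -> List.In (nth d L i) L.
Proof.
elim: L i => //= y L IH [|i] Hi; first by left.
by right; apply: IH.
Qed.

Lemma filter_In (T : Type) (p : pred T) (s : seq T) x :
  List.In x (filter p s) <-> List.In x s /\ p x.
Proof.
elim: s => [|y s IH] /=; first by split => // [[]].
case Hp: (p y) => /=; split.
- case=> [<-|/IH [H1 H2]]; [by split; [left|] | by split; [right|]].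
- case=> [[<-|H1] H2]; [by left | by right; apply/IH].
- by move/IH => [H1 H2]; split; [right|].
- case=> [[<-|H1] H2]; [by rewrite Hp in H2 | by apply/IH].
Qed.

Local Open Scope ring_scope.

Lemma ideal_neg (R : comNzRingType) (K : R -> Prop) x : is_ideal K -> K x -> K (- x).
Proof. by case=> _ _ HM Kx; rewrite -mulN1r; apply: HM. Qed.

Lemma ideal_sub (R : comNzRingType) (K : R -> Prop) x y : is_ideal K -> K x -> K y -> K (x - y).
Proof. move=> iK Kx Ky; case: (iK) => _ HA _; apply: HA => //; exact: ideal_neg. Qed.

Lemma maxl (R : comNzRingType) (L0 : seq (R -> Prop)) (P : (R -> Prop) -> Prop) :
  (forall I, is_ideal I -> exists I', List.In I' L0 /\ same_ideal I I') ->
  forall I0, is_ideal I0 -> P I0 -> exists K, [/\ is_ideal K, P K, subideal I0 K &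
     forall K', is_ideal K' -> P K' -> subideal K K' -> subideal K' K].
Proof.
move=> HL.
suff H: forall n K, count (fun I => ~~ pb (subideal I K)) L0 = n -> is_ideal K -> P K ->
  exists K', [/\ is_ideal K', P K', subideal K K' &
     forall K'', is_ideal K'' -> P K'' -> subideal K' K'' -> subideal K'' K'].
  by move=> I0 iI0 PI0; exact: H _ _ erefl iI0 PI0.
elim/ltn_ind=> n IH K Hn iK PK.
case: (classic (exists K', [/\ is_ideal K', P K', subideal K K' & ~ subideal K' K]))
  => [[K' [iK' PK' sKK' nK'K]] | Hno].
- have lt: (count (fun I => ~~ pb (subideal I K')) L0 < n)%N.
    rewrite -Hn; apply: count_lt.
      move=> I _ /pbP H1; apply/pbP => H2; apply: H1 => x /H2; exact: sKK'.
    have [I' [HI' sI']] := HL K' iK'.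
    exists I'; split => //; split.
      apply/pbP => H2; apply: nK'K => x /sI' /H2 //.
    by rewrite negbK; apply/pbP => x /sI'.
  have [K'' [i1 i2 i3 i4]] := IH _ lt K' erefl iK' PK'.
  exists K''; split => // x /sKK'; exact: i3.
- exists K; split => // K' iK' PK' sKK'; apply: NNPP => nn; apply: Hno; by exists K'.
Qed.

Lemma proper_sub_m (R : comNzRingType) (m : R -> Prop) (L0 : seq (R -> Prop)) :
  is_local_with m ->
  (forall I, is_ideal I -> exists I', List.In I' L0 /\ same_ideal I I') ->
  forall A, is_ideal A -> ~ A 1 -> subideal A m.
Proof.
move=> [_ Hl] HL A iA nA.
have [K [iK PK sAK mK]] := maxl (P := fun I => ~ I 1) HL iA nA.
have Hmax : is_maximal K by split => // I iI sKI nI; exact: mK.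
have Hs := Hl K Hmax.
by move=> x /sAK /Hs.
Qed.

Lemma card_cover (R : comNzRingType) (S K : R -> Prop) (N q : nat) (f : nat -> R) :
  card_le K N -> (forall y, S y -> exists j, (j < q)%N /\ K (y - f j)) -> card_le S (q * N).
Proof.
move=> HK Hcov s us sS.
pose g y := match excluded_middle_informative (exists j, (j < q)%N /\ K (y - f j)) with
  | left H => proj1_sig (constructive_indefinite_description _ H) | right _ => 0%N end.
have gP : forall y, S y -> (g y < q)%N /\ K (y - f (g y)).
  move=> y Sy; rewrite /g; case: excluded_middle_informative => [H|H].
    by case: constructive_indefinite_description.
  by exfalso; apply: H; apply: Hcov.
suff: forall q', (q' <= q)%N -> forall s, uniq s ->
   (forall y, y \in s -> S y /\ (g y < q')%N) -> (size s <= q' * N)%N.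
  move=> H; apply: H => // y ys; split; [exact: sS | exact: (gP y (sS y ys)).1].
elim=> [|q' IH] Hq s0 u0 H0.
  case: s0 {u0} H0 => // y s0 H; by have := (H y (mem_head _ _)).2.
rewrite -(count_predC (fun y => (g y < q')%N) s0) -!size_filter mulSn addnC.
apply: leq_add; last first.
  apply: IH; [exact: ltnW | exact: filter_uniq | ].
  by move=> y; rewrite mem_filter => /andP [H1 /H0 [H2 _]].
have := HK (map (fun y => y - f q') (filter (predC (fun y => (g y < q')%N)) s0)).
rewrite size_map; apply.
  rewrite map_inj_uniq; [exact: filter_uniq | exact: addIr].
move=> z /mapP [y]; rewrite mem_filter /= => /andP [H1 /H0 [H2 H3]] ->.
have ->: q' = g y by apply/eqP; rewrite eqn_leq leqNgt (negbTE H1) /= -ltnS H3.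
exact: (gP y H2).2.
Qed.

Lemma card_le_mono (R : comNzRingType) (S : R -> Prop) a b :
  card_le S a -> (a <= b)%N -> card_le S b.
Proof. by move=> H ab s us sS; apply: leq_trans (H s us sS) ab. Qed.

Lemma ideal_gen_ideal (R : comNzRingType) (S : R -> Prop) : is_ideal (ideal_gen S).
Proof.
split.
- by move=> I [] .
- move=> x y Hx Hy I iI sI; case: (iI) => _ HA _; apply: HA; [exact: Hx | exact: Hy].
- move=> a x Hx I iI sI; case: (iI) => _ _ HM; exact: HM (Hx I iI sI).
Qed.

Lemma ideal_pow_ideal (R : comNzRingType) (m : R -> Prop) i : is_ideal (ideal_pow m i).
Proof. case: i => [|i] /=; [by split | exact: ideal_gen_ideal]. Qed.

Lemma main (R : comNzRingType) (m : R -> Prop) (q : nat) (r : seq R) (L0 : seq (R -> Prop)) :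
  is_local_with m -> (0 < q)%N -> size r = q ->
  (forall x, exists2 i, (i < size r)%N & m (x - nth 0 r i)) ->
  (forall I, is_ideal I -> exists I', List.In I' L0 /\ same_ideal I I') ->
  forall k (L : seq (R -> Prop)) (J : R -> Prop), size L = k -> is_ideal J ->
  (forall I, is_ideal I -> subideal I J -> exists I', List.In I' L /\ same_ideal I I') ->
  card_le J (q ^ size L).
Proof.
move=> Hloc q0 Hr Hcov HL0.
have [[im nm1 _] _] := Hloc.
move=> nk; elim/ltn_ind: nk => nk IH L J Hsz iJ HJ.
case: (classic (exists x, J x /\ x <> 0)) => [[x0 [Jx0 x0n]] | Hz]; last first.
  move=> s us sS; apply: leq_trans (_ : (1 <= _)%N); last by rewrite expn_gt0 q0.
  have all0: forall y, y \in s -> y = 0.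
    by move=> y /sS Jy; apply: NNPP => ny; apply: Hz; exists y.
  case: s us all0 {sS} => // a [|b s] //= /andP [nab _] H.
  have Ha := H a (mem_head _ _).
  have Hb : b = 0 by apply: H; rewrite !inE eqxx orbT.
  by rewrite Ha Hb inE eqxx in nab.
pose Z := fun y : R => y = 0.
have iZ : is_ideal Z.
  split; rewrite /Z //; first by move=> x y -> ->; rewrite addr0.
  by move=> a x ->; rewrite mulr0.
have PZ : subideal Z J /\ ~ subideal J Z.
  split; first by move=> y ->; case: iJ.
  by move=> H; apply: x0n; apply: H.
have [K [iK [sKJ nJK] _ mK]] :=
  maxl (P := fun K => subideal K J /\ ~ subideal J K) HL0 iZ PZ.
have [x [Jx nKx]] : exists x, J x /\ ~ K x.
  apply: NNPP => H; apply: nJK => y Jy; apply: NNPP => nKy; apply: H; by exists y.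
have mx : forall b, m b -> K (b * x).
  move=> b mb.
  pose K2 := fun z => exists k b', [/\ K k, m b' & z = k + b' * x].
  have iK2 : is_ideal K2.
    split.
    - exists 0, 0; split; [by case: iK | by case: im | by rewrite mul0r addr0].
    - move=> _ _ [k1 [b1 [Hk1 Hb1 ->]]] [k2 [b2 [Hk2 Hb2 ->]]].
      exists (k1 + k2), (b1 + b2); split;
        [case: iK => _ HA _; exact: HA | case: im => _ HA _; exact: HA | ].
      by rewrite mulrDl addrACA.
    - move=> c _ [k1 [b1 [Hk1 Hb1 ->]]]; exists (c * k1), (c * b1); split;
        [case: iK => _ _ HM; exact: HM | case: im => _ _ HM; exact: HM | ].
      by rewrite mulrDr mulrA.
  have sKK2 : subideal K K2.
    by move=> k Hk; exists k, 0; split => //; [by case: im | by rewrite mul0r addr0].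
  have sK2J : subideal K2 J.
    move=> _ [k [b' [Hk Hb' ->]]]; case: iJ => _ HA HM; apply: HA; [exact: sKJ | exact: HM].
  case: (classic (subideal J K2)) => HJK2; last first.
    apply: (mK K2 iK2 (conj sK2J HJK2) sKK2).
    exists 0, b; split => //; [by case: iK | by rewrite add0r].
  exfalso; have [k0 [b' [Hk0 Hb' Hxe]]] := HJK2 x Jx.
  pose A := fun c => K (c * x).
  have iA : is_ideal A.
    split; rewrite /A.
    - by rewrite mul0r; case: iK.
    - by move=> c d; rewrite mulrDl; case: iK => _ HA _; exact: HA.
    - by move=> c d; rewrite -mulrA; case: iK => _ _ HM; exact: HM.
  have nA1 : ~ A 1 by rewrite /A mul1r.
  have A1b : A (1 - b') by rewrite /A mulrBl mul1r {1}Hxe addrK.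
  have m1b := proper_sub_m Hloc HL0 iA nA1 A1b.
  apply: nm1; rewrite -(subrK b' 1); case: im => _ HA _; exact: HA.
have cov : forall y, J y -> exists j, (j < q)%N /\ K (y - nth 0 r j * x).
  pose K1 := fun z => exists k a, K k /\ z = k + a * x.
  have iK1 : is_ideal K1.
    split.
    - exists 0, 0; split; [by case: iK | by rewrite mul0r addr0].
    - move=> _ _ [k1 [b1 [Hk1 ->]]] [k2 [b2 [Hk2 ->]]].
      exists (k1 + k2), (b1 + b2); split; [case: iK => _ HA _; exact: HA | ].
      by rewrite mulrDl addrACA.
    - move=> c _ [k1 [b1 [Hk1 ->]]]; exists (c * k1), (c * b1); split;
        [case: iK => _ _ HM; exact: HM | ].
      by rewrite mulrDr mulrA.
  have sKK1 : subideal K K1.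
    by move=> k Hk; exists k, 0; split => //; rewrite mul0r addr0.
  have sK1J : subideal K1 J.
    move=> _ [k [b' [Hk ->]]]; case: iJ => _ HA HM; apply: HA; [exact: sKJ | exact: HM].
  have HJK1 : subideal J K1.
    apply: NNPP => H; apply: nKx; apply: (mK K1 iK1 (conj sK1J H) sKK1).
    exists 0, 1; split; [by case: iK | by rewrite mul1r add0r].
  move=> y /HJK1 [k [a [Hk ->]]]; have [i Hi Hmi] := Hcov a.
  exists i; split; first by rewrite -Hr.
  rewrite -addrA -mulrBl; case: iK => _ HA _; apply: HA => //; exact: mx.
pose L' := filter (fun I => pb (subideal I K)) L.
have HL' : forall I, is_ideal I -> subideal I K -> exists I', List.In I' L' /\ same_ideal I I'.
  move=> I iI sIK; have [I' [HI' sI']] := HJ I iI (fun z Hz => sKJ z (sIK z Hz)).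
  exists I'; split => //; apply/filter_In; split => //; apply/pbP => z Hz.
  by apply: sIK; apply/sI'.
have lt : (size L' < nk)%N.
  rewrite -Hsz size_filter -count_predT; apply: count_lt => //.
  have [I' [HI' sI']] := HJ J iJ (fun z Hz => Hz).
  exists I'; split => //; split => //; apply/pbP => H; apply: nJK => z Hz; apply: H.
  by apply/sI'.
have IHK := IH _ lt L' K erefl iK HL'.
apply: (@card_le_mono _ _ (q * q ^ size L')); first exact: card_cover IHK cov.
by rewrite -expnS; apply: leq_pexp2l => //; rewrite Hsz.
Qed.

Theorem lemma2p9 (R : comNzRingType) (m : R -> Prop) (q : nat) :
  is_local_with m -> artinian R -> quot_card m q -> finitely_many_ideals R ->
  (forall i n : nat, (1 <= i)%N -> num_ideals_in (ideal_pow m i) n ->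
     card_le (ideal_pow m i) (q ^ n)) /\
  (forall n : nat, num_ideals_in (fun _ : R => True) n ->
     card_le (fun _ : R => True) (q ^ n)).
Proof.
move=> Hloc _ [r [Hr _ Hcov]] [L0 HL0].
have HL0' : forall I, is_ideal I -> exists I', List.In I' L0 /\ same_ideal I I'.
  move=> I iI; have [i Hi Hs] := HL0 I iI.
  by exists (nth (fun _ => False) L0 i); split; [exact: nth_In | ].
have q0 : (0 < q)%N by have [i Hi _] := Hcov 0; rewrite -Hr; exact: leq_ltn_trans (leq0n i) Hi.
have key : forall (J : R -> Prop) (n : nat), is_ideal J -> num_ideals_in J n -> card_le J (q ^ n).
  move=> J n iJ [L [HsL _ _ Hrep]]; rewrite -HsL.
  apply: (main Hloc q0 Hr Hcov HL0' erefl iJ).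
  move=> I iI sIJ; have [i Hi Hs] := Hrep I iI sIJ.
  by exists (nth (fun _ => False) L i); split; [exact: nth_In | ].
split.
  by move=> i n _; apply: key; apply: ideal_pow_ideal.
by move=> n; apply: key; split.
Qed.
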